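(* Let $(G,\rho)$ have vertices $v,w$ and edges $a_1,\dots,a_5$, each joining $v$ and $w$, with $\rho_v=(a_1,a_2,a_3,a_4,a_5)$ and $\rho_w=(a_1,a_3,a_2,a_5,a_4)$. Let $(G',\rho')$ have the same vertices $v,w$ and edges $b_1,\dots,b_5$, each joining $v$ and $w$, with $\rho'_v=(b_1,b_4,b_2,b_5,b_3)$ and $\rho'_w=(b_1,b_5,b_3,b_4,b_2)$. Let $\varphi:\mathcal T(G)\to\mathcal T(G')$ send the tree $\{a_i\}$ to $\{b_i\}$, and let $\gamma:\operatorname{Pic}^0(G)\to\operatorname{Pic}^0(G')$ send the class of $n v-n w$ to the class of $2nv-2nw$ (an isomorphism since both groups are $\mathbb Z/5\mathbb Z$). Then for every vertex $u\in\{v,w\}$ and for $\alpha$ either the rotor routing process or the Bernardi process, $\varphi(\alpha_u^{G}(S,T))=\alpha_u^{G'}(\gamma(S),\varphi(T))$ for all $S\in\operatorname{Pic}^0(G)$, $T\in\mathcal T(G)$. However, the genus of $(G,\rho)$ is $1$ while the genus of $(G',\rho')$ is $2$.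
   Context: A ribbon graph $(G,\rho)$ is a finite connected loopless multigraph with, for each vertex $u$, a cyclic order $\rho_u$ on the edges at $u$. $\mathcal T(G)$ is the set of spanning trees (here each single edge). $\operatorname{Pic}^0(G)$ is the group of degree-zero integer chip configurations modulo firings (firing $u$ sends one chip from $u$ along each incident edge); $\operatorname{Pic}^k$ likewise for degree $k$. Rotor routing torsor $r_u$: for $S\in\operatorname{Pic}^0$, $T\in\mathcal T$, take a representative of $S$ nonnegative away from $u$; orient $T$ towards $u$, giving each other vertex an outgoing edge (rotor); while some vertex $x\ne u$ has positive chips, advance its rotor to the next edge in $\rho_x$ and send a chip along it; when all vertices other than $u$ have zero chips, the rotors form $r_u(S,T)$. Bernardi torsor $\beta_u$: with half-edges $(e,x)$, for $T$ start at $(e_0,u)$ for a fixed edge $e_0$ at $u$; at $(e',x')$: if $e'\in T$ with other endpoint $y$, move to $(e'',y)$ with $e''$ following $e'$ in $\rho_y$; if $e'\notin T$, move to $(\tilde e,x')$ with $\tilde e$ following $e'$ in $\rho_{x'}$ and place a chip on $x'$ if the other half-edge of $e'$ has not yet been visited. Stop on returning to $(e_0,u)$. The divisors $D_T$ (degree $|E|-|V|+1$) give a bijection of $\mathcal T$ with $\operatorname{Pic}^{|E|-|V|+1}$, and $\beta_u(S,T)$ is the unique $T'$ with $[D_{T'}]=[D_T]+S$. Genus: a cycle is a closed walk which, entering a vertex $x$ along $e$, leaves along the edge following $e$ in $\rho_x$; the genus $g$ satisfies $2g=2-|V|+|E|-\operatorname{cyc}(G,\rho)$, where $\operatorname{cyc}$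 is the number of cycles. *)

(* Defs.v *)
From mathcomp Require Import all_boot all_order all_algebra.
Set Implicit Arguments. Unset Strict Implicit. Unset Printing Implicit Defensive.
Import GRing.Theory Num.Theory.
Local Open Scope ring_scope.

(** * Ribbon graphs
    A ribbon graph on vertex type [V] and edge type [E]: each edge [e] has
    endpoints [rend1 e] and [rend2 e]; [rrot x] lists the edges at [x] in the
    cyclic order rho_x (the successor of [e] is [next (rrot x) e], wrapping
    around). *)
Record ribbon (V E : finType) := Ribbon {
  rend1 : E -> V;
  rend2 : E -> V;
  rrot : V -> seq E }.

Section Ribbon.
Variables (V E : finType) (G : ribbon V E).

Definition incident (e : E) (x : V) : bool := (rend1 G e == x) || (rend2 G e == x).

Definition other_end (e : E) (x : V) : V :=
  if rend1 G e == x then rend2 G e else rend1 G e.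

Definition rsucc (x : V) (e : E) : E := next (rrot G x) e.

Definition ribbon_wf : Prop :=
  (forall e, rend1 G e != rend2 G e) /\
  (forall x, uniq (rrot G x) /\ forall e, (e \in rrot G x) = incident e x).

Definition adjT (T : {set E}) : rel V :=
  fun x y => [exists e in T, incident e x && (other_end e x == y) && (x != y)].

Definition spanning_tree (T : {set E}) : bool :=
  (#|T| == #|V|.-1)%N && [forall x, forall y, connect (adjT T) x y].

Definition divisor := {ffun V -> int}.

Definition deg (D : divisor) : int := \sum_(x : V) D x.

(** [lap z] = effect of firing each vertex x exactly (z x) times (with sign):
    (lap z) x = sum over edges e at x of (z x - z (other end)). *)
Definition lap (z : {ffun V -> int}) : divisor :=
  [ffun x => \sum_(e : E | incident e x) (z x - z (other_end e x))].

Definition lin_equiv (D D' : divisor) : Prop :=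
  exists z : {ffun V -> int}, D' = [ffun x => D x - lap z x].

Definition rotors := {ffun V -> E}.

(** [rho] is the rotor configuration obtained by orienting the tree [T]
    towards [u]: every x <> u points along an edge of T at x, and following
    the rotors from any vertex leads to u. *)
Definition rotors_of_tree (u : V) (T : {set E}) (rho : rotors) : Prop :=
  (forall x, x != u -> (rho x \in T) && incident (rho x) x) /\
  (forall x, exists n, iter n (fun y => if y == u then u else other_end (rho y) y) x = u).

Definition rr_step (u : V) (s s' : divisor * rotors) : Prop :=
  exists x, [/\ x != u, 0 < s.1 x &
    (let e := rsucc x (s.2 x) in
     let y := other_end e x in
     s' = ([ffun z => s.1 z - (z == x)%:Z + (z == y)%:Z],
           [ffun z => if z == x then e else s.2 z]))].

Inductive rr_reach (u : V) : divisor * rotors -> divisor * rotors -> Prop :=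
| rr_refl s : rr_reach u s s
| rr_trans s s' s'' : rr_step u s s' -> rr_reach u s' s'' -> rr_reach u s s''.

(** [rr_torsor u D T T'] : r_u([D], T) = T'. *)
Definition rr_torsor (u : V) (D : divisor) (T T' : {set E}) : Prop :=
  exists D0 rho0 Dend rhoend,
    [/\ lin_equiv D D0 /\ (forall x, x != u -> 0 <= D0 x),
        rotors_of_tree u T rho0,
        rr_reach u (D0, rho0) (Dend, rhoend),
        (forall x, x != u -> Dend x = 0) &
        T' = [set rhoend x | x in [set x | x != u]]].

(** a half-edge is a pair (e, x) *)
Definition bstep (T : {set E}) (h : E * V) : E * V :=
  let: (e, x) := h in
  if e \in T then let y := other_end e x in (rsucc y e, y)
  else (rsucc x e, x).

Definition btour (u : V) (e0 : E) (T : {set E}) : seq (E * V) :=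
  orbit (bstep T) (e0, u).

Definition bdiv (u : V) (e0 : E) (T : {set E}) : divisor :=
  let t := btour u e0 T in
  [ffun z => (\sum_(i < size t)
     let h := nth (e0, u) t i in
     [&& h.1 \notin T, h.2 == z &
         (h.1, other_end h.1 h.2) \notin take i t])%:Z].

(** [bern_torsor u e0 D T T'] : beta_u([D], T) = T', i.e. T' is a spanning
    tree with [D_T'] = [D_T] + [D]. *)
Definition bern_torsor (u : V) (e0 : E) (D : divisor) (T T' : {set E}) : Prop :=
  spanning_tree T' /\ lin_equiv [ffun x => bdiv u e0 T x + D x] (bdiv u e0 T').

Definition darts : {set E * V} := [set d | incident d.1 d.2].

(** entering x along e, leave along the edge following e in rho_x *)
Definition face_step (d : E * V) : E * V :=
  let: (e, x) := d in let e' := rsucc x e in (e', other_end e' x).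

Definition cyc : nat :=
  size (undup [seq [set d' | fconnect face_step d d'] | d <- enum darts]).

Definition has_genus (g : int) : Prop :=
  2 * g = 2 - (#|V|)%:Z + (#|E|)%:Z - (cyc)%:Z.

End Ribbon.

(** vertices: v = 0, w = 1; edges a_i (resp. b_i) = i-1 *)
Definition vv : 'I_2 := @Ordinal 2 0 isT.
Definition ww : 'I_2 := @Ordinal 2 1 isT.
Definition ed (i : nat) : 'I_5 := inord i.

Definition Gprop : ribbon 'I_2 'I_5 :=
  Ribbon (fun _ => vv) (fun _ => ww)
    (fun x => if x == vv then [:: ed 0; ed 1; ed 2; ed 3; ed 4]
              else [:: ed 0; ed 2; ed 1; ed 4; ed 3]).

Definition G'prop : ribbon 'I_2 'I_5 :=
  Ribbon (fun _ => vv) (fun _ => ww)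
    (fun x => if x == vv then [:: ed 0; ed 3; ed 1; ed 4; ed 2]
              else [:: ed 0; ed 4; ed 2; ed 3; ed 1]).

Definition phi (T : {set 'I_5}) : {set 'I_5} := [set i : 'I_5 | i \in T].

(** gamma : class of n v - n w |-> class of 2n v - 2n w; a degree-zero
    divisor D on {v, w} equals n v - n w with n = D v. *)
Definition gamma (D : {ffun 'I_2 -> int}) : {ffun 'I_2 -> int} :=
  [ffun x => if x == vv then 2 * D vv else - (2 * D vv)].

(* Main.v *)
Require Import Defs.
From mathcomp Require Import all_boot all_order all_algebra.
Import GRing.Theory Num.Theory.
Local Open Scope ring_scope.
Set Implicit Arguments. Unset Strict Implicit. Unset Printing Implicit Defensive.

Definition e0_ : 'I_5 := @Ordinal 5 0 isT.
Definition e1_ : 'I_5 := @Ordinal 5 1 isT.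
Definition e2_ : 'I_5 := @Ordinal 5 2 isT.
Definition e3_ : 'I_5 := @Ordinal 5 3 isT.
Definition e4_ : 'I_5 := @Ordinal 5 4 isT.
Definition ords5 := [:: e0_; e1_; e2_; e3_; e4_].
Definition ords2 := [:: vv; ww].

Definition Gc : ribbon 'I_2 'I_5 :=
  Ribbon (fun _ => vv) (fun _ => ww)
    (fun x => if x == vv then [:: e0_; e1_; e2_; e3_; e4_]
              else [:: e0_; e2_; e1_; e4_; e3_]).
Definition G'c : ribbon 'I_2 'I_5 :=
  Ribbon (fun _ => vv) (fun _ => ww)
    (fun x => if x == vv then [:: e0_; e3_; e1_; e4_; e2_]
              else [:: e0_; e4_; e2_; e3_; e1_]).

Lemma edE0 : ed 0 = e0_. Proof. by apply: val_inj; rewrite /= inordK. Qed.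
Lemma edE1 : ed 1 = e1_. Proof. by apply: val_inj; rewrite /= inordK. Qed.
Lemma edE2 : ed 2 = e2_. Proof. by apply: val_inj; rewrite /= inordK. Qed.
Lemma edE3 : ed 3 = e3_. Proof. by apply: val_inj; rewrite /= inordK. Qed.
Lemma edE4 : ed 4 = e4_. Proof. by apply: val_inj; rewrite /= inordK. Qed.

Lemma GpropE : Gprop = Gc.
Proof. by rewrite /Gprop edE0 edE1 edE2 edE3 edE4. Qed.
Lemma G'propE : G'prop = G'c.
Proof. by rewrite /G'prop edE0 edE1 edE2 edE3 edE4. Qed.

Section Gen.
Variables (V E : finType) (H : ribbon V E).

Definition bstep1 (t : E) (h : E * V) : E * V :=
  let: (e, x) := h in
  if e == t then let y := other_end H e x in (rsucc H y e, y)
  else (rsucc H x e, x).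

Definition per (T : eqType) (f : T -> T) x :=
  (find (fun k => iter k.+1 f x == x) (iota 0 20)).+1.

Definition tr (T : eqType) (f : T -> T) x := traject f x (per f x).

Definition tour1 u e0 t := tr (bstep1 t) (e0, u).

Definition bdiv1 u e0 t z : int :=
  let s := tour1 u e0 t in
  Posz (foldr (fun i a => (nat_of_bool [&& (nth (e0, u) s i).1 != t, (nth (e0, u) s i).2 == z &
         ((nth (e0, u) s i).1, other_end H (nth (e0, u) s i).1 (nth (e0, u) s i).2)
            \notin take i s] + a)%N) 0%N (iota 0 (size s))).
End Gen.

From mathcomp Require Import zify ring lra.

Definition oth (y : 'I_2) : 'I_2 := if y == vv then ww else vv.

Lemma I2P (y : 'I_2) : y = vv \/ y = ww.
Proof. by case: y => [[|[|m]] p]; [left|right|]; try apply: val_inj. Qed.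

Lemma oth_neq y : oth y != y. Proof. by case: (I2P y) => ->. Qed.
Lemma neq_oth y u : y != u -> y = oth u.
Proof. by case: (I2P y) => ->; case: (I2P u) => ->. Qed.
Lemma othK y : oth (oth y) = y. Proof. by case: (I2P y) => ->. Qed.

Section Shape.
Variable H : ribbon 'I_2 'I_5.
Hypothesis h1 : forall e, rend1 H e = vv.
Hypothesis h2 : forall e, rend2 H e = ww.

Lemma other_endE e y : other_end H e y = oth y.
Proof. by rewrite /other_end h1 h2; case: (I2P y) => ->. Qed.
Lemma incidentT e y : incident H e y.
Proof. by rewrite /incident h1 h2; case: (I2P y) => ->. Qed.

Lemma lapS (z : {ffun 'I_2 -> int}) y :
  \sum_(e | incident H e y) (z y - z (other_end H e y)) = 5 * (z y - z (oth y)).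
Proof.
rewrite (eq_bigl xpredT); last by move=> e; rewrite incidentT.
rewrite (eq_bigr (fun _ => z y - z (oth y))); last by move=> e _; rewrite other_endE.
by rewrite sumr_const card_ord mulr_natl.
Qed.
Lemma lapE z y : lap H z y = 5 * (z y - z (oth y)).
Proof. by rewrite ffunE lapS. Qed.

Lemma lin_equivE A B : lin_equiv H A B <->
  (exists k : int, A vv - B vv = 5 * k) /\ A vv + A ww = B vv + B ww.
Proof.
split.
  case=> z ->; rewrite !ffunE !lapS /=.
  split; first by exists (z vv - z ww); ring.
  rewrite /oth /=; ring.
case=> [[k hk] hs]; exists [ffun y => if y == vv then k else 0].
apply/ffunP => y; rewrite ffunE lapE !ffunE.
case: (I2P y) => -> /=; rewrite /oth /=; lra.
Qed.
End Shape.

Lemma absz_natE (n : nat) : `|n%:Z|%N = n. Proof. by []. Qed.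

Lemma modz_help (a c : int) (j : nat) : a = j%:Z + 5 * c -> `|(a %% 5)%Z|%N = (j %% 5)%N.
Proof. by move->; rewrite addrC mulrC modzMDl modz_nat. Qed.

Lemma modz_abs (a : int) : ((a %% 5)%Z) = (`|(a %% 5)%Z|%N)%:Z.
Proof. by rewrite gez0_abs // modz_ge0. Qed.

Lemma modz_2 (a : int) : `|((2 * a) %% 5)%Z|%N = (2 * `|(a %% 5)%Z|%N %% 5)%N.
Proof. by rewrite -modzMmr (modz_abs a) -PoszM modz_nat. Qed.

Lemma iter_mod5 (f : 'I_5 -> 'I_5) (h5 : forall e, iter 5 f e = e) j e :
  iter j f e = iter (j %% 5) f e.
Proof.
rewrite {1}(divn_eq j 5) iterD; elim: (j %/ 5)%N (iter _ f e) => // q IH y.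
by rewrite mulSn iterD IH h5.
Qed.

Lemma set_neq (u : 'I_2) : [set y : 'I_2 | y != u] = [set oth u].
Proof. by apply/setP => y; rewrite !inE; case: (I2P y) => ->; case: (I2P u) => ->. Qed.

Section RR.
Variable H : ribbon 'I_2 'I_5.
Hypothesis h1 : forall e, rend1 H e = vv.
Hypothesis h2 : forall e, rend2 H e = ww.

Lemma rr_inv u s s' : rr_reach H u s s' -> forall t j,
  s.2 (oth u) = iter j (rsucc H (oth u)) t ->
  exists j' : nat, s'.2 (oth u) = iter j' (rsucc H (oth u)) t /\
                   s'.1 (oth u) + j'%:Z = s.1 (oth u) + j%:Z.
Proof.
elim => [s0 | s0 s1 s2 [x0 [hx0 hpos E]] _ IH] t j hj; first by exists j.
rewrite /= in E; have ex0 := neq_oth hx0; subst x0 s1.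
have [|j' [h1' h2']] := IH t j.+1.
  by rewrite /= ffunE eqxx hj.
exists j'; split => //; rewrite h2' /= ffunE eqxx other_endE // othK (negbTE (oth_neq u)) -[j.+1]addn1 PoszD /=; lra.
Qed.

Lemma rr_run u k : forall (d : divisor 'I_2) (r : rotors 'I_2 'I_5),
  d (oth u) = k%:Z -> exists d' r', [/\ rr_reach H u (d, r) (d', r'),
    d' (oth u) = 0 & r' (oth u) = iter k (rsucc H (oth u)) (r (oth u))].
Proof.
elim: k => [|k IH] d r hd; first by exists d, r; split => //; constructor.
set e := rsucc H (oth u) (r (oth u)).
set d1 : divisor 'I_2 := [ffun z => d z - (z == oth u)%:Z + (z == other_end H e (oth u))%:Z].
set r1 : rotors 'I_2 'I_5 := [ffun z => if z == oth u then e else r z].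
have [|d' [r' [hr hd' hr']]] := IH d1 r1.
  rewrite /d1 ffunE eqxx other_endE // othK (negbTE (oth_neq u)) hd.
  rewrite -[k.+1]addn1 PoszD /=; lra.
exists d', r'; split => //.
  apply: rr_trans hr; exists (oth u); split; first exact: oth_neq.
    by rewrite /= hd.
  by [].
by rewrite hr' /r1 ffunE eqxx iterSr.
Qed.

Lemma rr_char (h5 : forall y e, iter 5 (rsucc H y) e = e) u D t T' :
  rr_torsor H u D [set t] T' <->
  T' = [set iter `|(D (oth u) %% 5)%Z|%N (rsucc H (oth u)) t].
Proof.
split.
  case=> D0 [rho0 [Dend [rhoend [[[z hz] hnn] [hr1 hr2] hreach hend ->]]]].
  have /andP[/set1P ht _] := hr1 _ (oth_neq u).
  have [j' [hj1 hj2]] := rr_inv hreach (j := 0) (t := t) ht.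
  rewrite set_neq imset_set1 hj1 (iter_mod5 (h5 _)); congr [set iter _ _ t].
  apply/esym/(modz_help (c := z (oth u) - z (oth (oth u)))).
  move: hj2; rewrite /= hend ?oth_neq // hz ffunE lapE //; lra.
move=> ->.
set q := ((D (oth u)) %/ 5)%Z.
set zq : {ffun 'I_2 -> int} := [ffun y => if y == oth u then q else 0].
set D0 : divisor 'I_2 := [ffun y => D y - lap H zq y].
set rho0 : rotors 'I_2 'I_5 := [ffun _ => t].
have hD0 : D0 (oth u) = (`|(D (oth u) %% 5)%Z|%N)%:Z.
  rewrite /D0 ffunE lapE // /zq !ffunE eqxx othK [u == _]eq_sym (negbTE (oth_neq u)).
  rewrite -modz_abs {1}(divz_eq (D (oth u)) 5) -/q; lra.

have [d' [r' [hr hd' hr']]] := rr_run rho0 hD0.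
exists D0, rho0, d', r'; split.
- split; first by exists zq.
  by move=> y /neq_oth ->; rewrite hD0.
- split; first by move=> y _; rewrite ffunE set11 incidentT.
  move=> y; case: (eqVneq y u) => [->|hy]; first by exists 0%N.
  exists 1%N; rewrite /= (negbTE hy) other_endE // (neq_oth hy) othK.
  by [].
- exact: hr.
- by move=> y /neq_oth ->.
- by rewrite set_neq imset_set1 hr' ffunE.
Qed.
End RR.
From mathcomp Require Import all_boot all_order all_algebra.
Import GRing.Theory Num.Theory.
Local Open Scope ring_scope.
Set Implicit Arguments. Unset Strict Implicit. Unset Printing Implicit Defensive.
Section Bern.
Variables (V E : finType) (H : ribbon V E).
Definition tourok u e0 t :=
  fcycle (bstep1 H t) (tour1 H u e0 t) && uniq (tour1 H u e0 t).

Lemma btourE u e0 t : tourok u e0 t -> btour H u e0 [set t] = tour1 H u e0 t.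
Proof.
case/andP => hc hu.
have hf : bstep H [set t] =1 bstep1 H t.
  by case=> e x; rewrite /bstep /bstep1 in_set1.
have hc' : fcycle (bstep H [set t]) (tour1 H u e0 t) by rewrite (eq_fcycle hf).
have ht : tour1 H u e0 t = (e0, u) :: behead (tour1 H u e0 t).
  by rewrite /tour1 /tr /per [traject _ _ _.+1]trajectS.
have hx : (e0, u) \in tour1 H u e0 t by rewrite ht mem_head.
rewrite /btour (orbitE hc' hu hx).
move: (tour1 H u e0 t) ht => p ht.
have -> : index (e0, u) p = 0%N by rewrite ht /= eqxx.
by rewrite rot0.
Qed.

Lemma sum_foldr n (F : nat -> nat) :
  (\sum_(i < n) F i)%N = foldr (fun i a => F i + a)%N 0%N (iota 0 n).
Proof.
rewrite -(big_mkord xpredT F) /index_iota subn0.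
by elim: (iota 0 n) => [|i s IH]; rewrite ?big_nil ?big_cons ?IH.
Qed.

Lemma bdivE u e0 t z : tourok u e0 t -> bdiv H u e0 [set t] z = bdiv1 H u e0 t z.
Proof.
move=> ok; rewrite /bdiv /bdiv1 ffunE btourE //.
move: (tour1 H u e0 t) => p.
rewrite (sum_foldr (size p) (fun i => (let h := nth (e0, u) p i in
     [&& h.1 \notin [set t], h.2 == z &
         (h.1, other_end H h.1 h.2) \notin take i p]))).
congr Posz.
by elim: (iota 0 _) => // i s IH; rewrite [LHS]/= [RHS]/= IH in_set1.
Qed.
End Bern.

Lemma orbit_tr (T : finType) (f : T -> T) x :
  fcycle f (tr f x) -> uniq (tr f x) -> orbit f x = tr f x.
Proof.
move=> hc hu.
have ht : tr f x = x :: behead (tr f x).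
  by rewrite /tr /per [traject _ _ _.+1]trajectS.
have hx : x \in tr f x by rewrite ht mem_head.
rewrite (orbitE hc hu hx).
move: (tr f x) ht => p ht.
have -> : index x p = 0%N by rewrite ht /= eqxx.
by rewrite rot0.
Qed.

Fixpoint cnt (A : Type) (r : A -> A -> bool) (s : seq A) : nat :=
  if s is x :: s' then ((if has (r x) s' then 0 else 1) + cnt r s')%N else 0%N.

Lemma size_undup_cnt (A B : eqType) (g : A -> B) (r : rel A) s :
  (forall x y, (g x == g y) = r x y) -> size (undup (map g s)) = cnt r s.
Proof.
move=> hr; elim: s => //= x s IH.
have -> : (g x \in map g s) = has (r x) s.
  apply/mapP/hasP => [[y hy /eqP]|[y hy]]; first by rewrite hr; exists y.
  by rewrite -hr => /eqP; exists y.
by case: (has (r x) s); rewrite /= IH.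
Qed.

Lemma mem5 (e : 'I_5) : e \in ords5.
Proof. by case: e => [[|[|[|[|[|m]]]]] p]. Qed.
Lemma mem2 (e : 'I_2) : e \in ords2.
Proof. by case: e => [[|[|m]] p]. Qed.

Definition L10 : seq ('I_5 * 'I_2) := [seq (e, x) | e <- ords5, x <- ords2].
Lemma memL10 d : d \in L10.
Proof. by case: d => e x; apply/allpairsP; exists (e, x); rewrite mem5 mem2. Qed.

Definition rtr (H : ribbon 'I_2 'I_5) (d1 d2 : 'I_5 * 'I_2) :=
  all (fun d => (d \in tr (face_step H) d1) == (d \in tr (face_step H) d2)) L10.
Definition fcheck H := all (fun d => fcycle (face_step H) (tr (face_step H) d)
                                && uniq (tr (face_step H) d)) L10.

Lemma cycE (H : ribbon 'I_2 'I_5) (h1 : forall e, rend1 H e = vv)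
  (h2 : forall e, rend2 H e = ww) : fcheck H -> cyc H = cnt (rtr H) L10.
Proof.
move=> fc.
have ho d : orbit (face_step H) d = tr (face_step H) d.
  by have /andP[] := allP fc d (memL10 d); apply: orbit_tr.
rewrite /cyc.
have hp : perm_eq (undup [seq [set d' | fconnect (face_step H) d d'] | d <- enum (darts H)])
                  (undup [seq [set d' | fconnect (face_step H) d d'] | d <- L10]).
  apply: perm_undup => y; apply/mapP/mapP => [[d hd ->]|[d hd ->]]; exists d => //.
    exact: memL10.
  by rewrite mem_enum inE incidentT.
rewrite (perm_size hp); apply: size_undup_cnt => d1 d2.
apply/idP/idP => [/eqP E|].
  apply/allP => d _; move/setP: E => /(_ d).
  rewrite !inE !fconnect_orbit !ho => hh; apply/eqP; exact: hh.
move/allP => hall; apply/eqP/setP => d; rewrite !inE !fconnect_orbit !ho.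
exact/eqP/(hall d (memL10 d)).
Qed.

Lemma h1G e : rend1 Gc e = vv. Proof. by []. Qed.
Lemma h2G e : rend2 Gc e = ww. Proof. by []. Qed.
Lemma h1G' e : rend1 G'c e = vv. Proof. by []. Qed.
Lemma h2G' e : rend2 G'c e = ww. Proof. by []. Qed.

Lemma phiE T : phi T = T. Proof. by apply/setP => i; rewrite inE. Qed.

Lemma sum2 (F : 'I_2 -> int) : \sum_(x : 'I_2) F x = F vv + F ww.
Proof.
rewrite big_ord_recl big_ord_recl big_ord0 addr0.
by congr (F _ + F _); apply: val_inj.
Qed.

Lemma spanE T : spanning_tree Gc T <-> exists t, T = [set t].
Proof.
split.
  by case/andP => /eqP hc _; apply/cards1P; rewrite hc card_ord.
move=> [t ->]; apply/andP; split; first by rewrite cards1 card_ord.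
apply/forallP => x; apply/forallP => y; case: (eqVneq x y) => [->|hxy].
  exact: connect0.
apply: connect1; apply/existsP; exists t.
rewrite inE eqxx incidentT //= other_endE // -(neq_oth (y := y) (u := x)) ?eqxx ?hxy //.
by rewrite eq_sym.
Qed.

Lemma gammaE (D : {ffun 'I_2 -> int}) y : D ww = - D vv -> gamma D y = 2 * D y.
Proof. by move=> hn; rewrite /gamma ffunE; case: (I2P y) => -> /=; rewrite ?hn //; lra. Qed.

Lemma mod5_lt (a : int) : (`|(a %% 5)%Z|%N < 5)%N.
Proof.
have h := @ltz_pmod a 5 isT.
rewrite -ltz_nat gez0_abs; last exact: modz_ge0.
exact: h.
Qed.

Lemma rrcheck : all (fun x => all (fun t => all (fun k =>
   iter k (rsucc Gc x) t == iter ((2 * k) %% 5) (rsucc G'c x) t) (iota 0 5)) ords5) ords2.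
Proof. by vm_compute. Qed.

Lemma h5check : all (fun x => all (fun e =>
   (iter 5 (rsucc Gc x) e == e) && (iter 5 (rsucc G'c x) e == e)) ords5) ords2.
Proof. by vm_compute. Qed.

Lemma h5G y e : iter 5 (rsucc Gc y) e = e.
Proof. by have /andP[/eqP ? _] := allP (allP h5check y (mem2 y)) e (mem5 e). Qed.
Lemma h5G' y e : iter 5 (rsucc G'c y) e = e.
Proof. by have /andP[_ /eqP ?] := allP (allP h5check y (mem2 y)) e (mem5 e). Qed.

Lemma rrE x t k : (k < 5)%N ->
  iter k (rsucc Gc x) t = iter ((2 * k) %% 5) (rsucc G'c x) t.
Proof.
move=> hk; apply/eqP.
by have := allP (allP (allP rrcheck x (mem2 x)) t (mem5 t)) k; rewrite mem_iota; apply.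
Qed.

Definition tabG : seq (seq (seq (nat * nat))) := [:: [:: [:: (0%N, 4%N); (1%N, 3%N); (2%N, 2%N); (3%N, 1%N); (4%N, 0%N)];
               [:: (4%N, 0%N); (0%N, 4%N); (1%N, 3%N); (2%N, 2%N); (3%N, 1%N)];
               [:: (3%N, 1%N); (4%N, 0%N); (0%N, 4%N); (1%N, 3%N); (2%N, 2%N)];
               [:: (2%N, 2%N); (3%N, 1%N); (4%N, 0%N); (0%N, 4%N); (1%N, 3%N)];
               [:: (1%N, 3%N); (2%N, 2%N); (3%N, 1%N); (4%N, 0%N); (0%N, 4%N)]];
           [:: [:: (4%N, 0%N); (2%N, 2%N); (3%N, 1%N); (0%N, 4%N); (1%N, 3%N)];
               [:: (1%N, 3%N); (4%N, 0%N); (0%N, 4%N); (2%N, 2%N); (3%N, 1%N)];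
               [:: (0%N, 4%N); (3%N, 1%N); (4%N, 0%N); (1%N, 3%N); (2%N, 2%N)];
               [:: (3%N, 1%N); (1%N, 3%N); (2%N, 2%N); (4%N, 0%N); (0%N, 4%N)];
               [:: (2%N, 2%N); (0%N, 4%N); (1%N, 3%N); (3%N, 1%N); (4%N, 0%N)]]].
Definition tabG' : seq (seq (seq (nat * nat))) := [:: [:: [:: (0%N, 4%N); (2%N, 2%N); (4%N, 0%N); (1%N, 3%N); (3%N, 1%N)];
               [:: (3%N, 1%N); (0%N, 4%N); (2%N, 2%N); (4%N, 0%N); (1%N, 3%N)];
               [:: (1%N, 3%N); (3%N, 1%N); (0%N, 4%N); (2%N, 2%N); (4%N, 0%N)];
               [:: (4%N, 0%N); (1%N, 3%N); (3%N, 1%N); (0%N, 4%N); (2%N, 2%N)];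
               [:: (2%N, 2%N); (4%N, 0%N); (1%N, 3%N); (3%N, 1%N); (0%N, 4%N)]];
           [:: [:: (4%N, 0%N); (0%N, 4%N); (2%N, 2%N); (1%N, 3%N); (3%N, 1%N)];
               [:: (3%N, 1%N); (4%N, 0%N); (1%N, 3%N); (0%N, 4%N); (2%N, 2%N)];
               [:: (1%N, 3%N); (2%N, 2%N); (4%N, 0%N); (3%N, 1%N); (0%N, 4%N)];
               [:: (2%N, 2%N); (3%N, 1%N); (0%N, 4%N); (4%N, 0%N); (1%N, 3%N)];
               [:: (0%N, 4%N); (1%N, 3%N); (3%N, 1%N); (2%N, 2%N); (4%N, 0%N)]]].

Definition bfun (tab : seq (seq (seq (nat * nat)))) (u : 'I_2) (e0 t : 'I_5) (z : 'I_2) : int :=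
  let p := nth (0, 0)%N (nth [::] (nth [::] tab u) e0) t in
  Posz (if z == vv then p.1 else p.2).

Definition tabcheck H tab := all (fun u => all (fun e0 => all (fun t =>
  (bdiv1 H u e0 t vv == bfun tab u e0 t vv) && (bdiv1 H u e0 t ww == bfun tab u e0 t ww))
  ords5) ords5) ords2.

Lemma tabcheckG : tabcheck Gc tabG. Proof. by vm_compute. Qed.
Lemma tabcheckG' : tabcheck G'c tabG'. Proof. by vm_compute. Qed.

Lemma tabE H tab : tabcheck H tab -> forall u e0 t z, bdiv1 H u e0 t z = bfun tab u e0 t z.
Proof.
move=> tc u e0 t z.
have /andP[/eqP h1 /eqP h2] := allP (allP (allP tc u (mem2 u)) e0 (mem5 e0)) t (mem5 t).
by case: (I2P z) => ->.
Qed.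

Definition bcheck (b b' : 'I_5 -> 'I_2 -> int) :=
  [&& all (fun t => all (fun t' =>
      (b' t' vv - b' t vv) - 2 * (b t' vv - b t vv) ==
        5 * (((b' t' vv - b' t vv) - 2 * (b t' vv - b t vv)) %/ 5)%Z) ords5) ords5,
      all (fun t => (b t vv + b t ww == 4) && (b' t vv + b' t ww == 4)) ords5 &
      all (fun t => all (fun r => has (fun t' =>
      let x := b t vv + r%:Z - b t' vv in x == 5 * (x %/ 5)%Z) ords5) (iota 0 5)) ords5].

Lemma bcheck_all : all (fun u => all (fun e0 => all (fun e0' =>
   bcheck (bfun tabG u e0) (bfun tabG' u e0')) ords5) ords5) ords2.
Proof. by vm_compute. Qed.

Lemma tourcheck : all (fun u => all (fun e0 => all (fun t =>
  tourok Gc u e0 t && tourok G'c u e0 t) ords5) ords5) ords2.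
Proof. by vm_compute. Qed.

Lemma tokG u e0 t : tourok Gc u e0 t.
Proof. by have /andP[] := allP (allP (allP tourcheck u (mem2 u)) e0 (mem5 e0)) t (mem5 t). Qed.
Lemma tokG' u e0 t : tourok G'c u e0 t.
Proof. by have /andP[] := allP (allP (allP tourcheck u (mem2 u)) e0 (mem5 e0)) t (mem5 t). Qed.

Lemma lin_b (Hc : ribbon 'I_2 'I_5) (h1 : forall e, rend1 Hc e = vv)
  (h2 : forall e, rend2 Hc e = ww) u e0 t t' (D' : {ffun 'I_2 -> int}) :
  tourok Hc u e0 t -> tourok Hc u e0 t' ->
  bdiv1 Hc u e0 t vv + bdiv1 Hc u e0 t ww = 4 ->
  bdiv1 Hc u e0 t' vv + bdiv1 Hc u e0 t' ww = 4 ->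
  D' vv + D' ww = 0 ->
  lin_equiv Hc [ffun x => bdiv Hc u e0 [set t] x + D' x] (bdiv Hc u e0 [set t']) <->
  exists k : int, bdiv1 Hc u e0 t vv + D' vv - bdiv1 Hc u e0 t' vv = 5 * k.
Proof.
move=> ok ok' d1 d2 d3.
rewrite (_ : [ffun x => bdiv Hc u e0 [set t] x + D' x] = [ffun x => bdiv1 Hc u e0 t x + D' x]);
  last by apply/ffunP => x; rewrite [LHS]ffunE [RHS]ffunE bdivE.
rewrite lin_equivE // [bdiv _ _ _ [set t'] vv]bdivE // [bdiv _ _ _ [set t'] ww]bdivE //.
rewrite !ffunE; split => [[hk _] | hk]; first exact hk.
split; first exact hk.
move: d1 d2 d3; move: (bdiv1 Hc u e0 t vv) (bdiv1 Hc u e0 t ww) (bdiv1 Hc u e0 t' vv)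
  (bdiv1 Hc u e0 t' ww) (D' vv) (D' ww) => a b c d x y d1 d2 d3.
by rewrite addrACA d1 d3 addr0 d2.
Qed.

Theorem proposition3p4 :
  ribbon_wf Gprop /\ ribbon_wf G'prop /\
  (forall u : 'I_2,
     (forall (D : {ffun 'I_2 -> int}) (T : {set 'I_5}),
        deg D = 0 -> spanning_tree Gprop T ->
        (exists T', rr_torsor Gprop u D T T') /\
        (forall T', rr_torsor Gprop u D T T' <->
                    rr_torsor G'prop u (gamma D) (phi T) (phi T'))) /\
     (forall (e0 e0' : 'I_5), incident Gprop e0 u -> incident G'prop e0' u ->
      forall (D : {ffun 'I_2 -> int}) (T : {set 'I_5}),
        deg D = 0 -> spanning_tree Gprop T ->
        (exists T', bern_torsor Gprop u e0 D T T') /\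
        (forall T', bern_torsor Gprop u e0 D T T' <->
                    bern_torsor G'prop u e0' (gamma D) (phi T) (phi T')))) /\
  has_genus Gprop 1 /\ has_genus G'prop 2.
Proof.
rewrite GpropE G'propE.
have wf (Hc : ribbon 'I_2 'I_5) : rend1 Hc = (fun _ => vv) -> rend2 Hc = (fun _ => ww) ->
   (forall x, uniq (rrot Hc x)) -> (forall x e, e \in rrot Hc x) -> ribbon_wf Hc.
  move=> e1 e2 hu hm; split; first by move=> e; rewrite e1 e2.
  by move=> x; split => // e; rewrite hm /incident e1 e2; case: (I2P x) => ->.
split.
  apply: wf => // x; first by case: (I2P x) => ->.
  by case: (I2P x) => -> e; case: e => [[|[|[|[|[|m]]]]] p].
split.
  apply: wf => // x; first by case: (I2P x) => ->.
  by case: (I2P x) => -> e; case: e => [[|[|[|[|[|m]]]]] p].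
split; last first.
  have f1 : fcheck Gc by vm_compute.
  have f2 : fcheck G'c by vm_compute.
  have c1 : cnt (rtr Gc) L10 = 3%N by vm_compute.
  have c2 : cnt (rtr G'c) L10 = 1%N by vm_compute.
  have e1 := cycE h1G h2G f1; have e2 := cycE h1G' h2G' f2.
  rewrite c1 in e1; rewrite c2 in e2.
  rewrite /has_genus e1 e2 !card_ord.
  by split.
move=> u; split.
  move=> D T hdeg /spanE [t ->].
  split; first by exists [set iter `|(D (oth u) %% 5)%Z|%N (rsucc Gc (oth u)) t];
    apply/(rr_char h1G h2G h5G).
  have hn : D ww = - D vv by move: hdeg; rewrite /deg sum2; lra.
  move=> T'; rewrite !phiE (rr_char h1G h2G h5G) (rr_char h1G' h2G' h5G').
  rewrite gammaE // modz_2 -rrE //.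
  exact: mod5_lt.
move=> e0 e0' _ _ D T hdeg /spanE [t ->].
have hn : D ww = - D vv by move: hdeg; rewrite /deg sum2; lra.
have hD : D vv + D ww = 0 by lra.
have hgD : gamma D vv + gamma D ww = 0 by rewrite !gammaE //; lra.
have /and3P[c1 c2 c3] := allP (allP (allP bcheck_all u (mem2 u)) e0 (mem5 e0)) e0' (mem5 e0').
have bE := tabE tabcheckG; have bE' := tabE tabcheckG'.
have dG t1 : bdiv1 Gc u e0 t1 vv + bdiv1 Gc u e0 t1 ww = 4.
  by rewrite !bE; have /andP[/eqP -> _] := allP c2 t1 (mem5 t1).
have dG' t1 : bdiv1 G'c u e0' t1 vv + bdiv1 G'c u e0' t1 ww = 4.
  by rewrite !bE'; have /andP[_ /eqP ->] := allP c2 t1 (mem5 t1).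
have LG t1 t2 := lin_b h1G h2G (tokG u e0 t1) (tokG u e0 t2) (dG t1) (dG t2) hD.
have LG' t1 t2 := lin_b h1G' h2G' (tokG' u e0' t1) (tokG' u e0' t2) (dG' t1) (dG' t2) hgD.
rewrite /bern_torsor !phiE; split.
  set r := `|(D vv %% 5)%Z|%N.
  have hr : r \in iota 0 5 by rewrite mem_iota /r mod5_lt.
  have /hasP[t' _ /eqP hx] := allP (allP c3 t (mem5 t)) r hr.
  exists [set t']; split; first by apply/spanE; exists t'.
  apply/LG; rewrite !bE.
  move: hx; rewrite /r gez0_abs; last exact: modz_ge0.
  move=> hx.
  have hdz := divz_eq (D vv) 5.
  move: hx hdz.
  move: ((bfun tabG u e0 t vv + (D vv %% 5)%Z - bfun tabG u e0 t' vv) %/ 5)%Z => p.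
  move: (bfun tabG u e0 t vv) (bfun tabG u e0 t' vv) (D vv) (D vv %% 5)%Z (D vv %/ 5)%Z => A B n m q.
  move=> hx hdz.
  exists (p + q); clear -hx hdz; lra.
move=> T'; rewrite phiE; split.
  case=> hsp hl; have [t' ET] := (spanE T').1 hsp; subst T'.
  split; first exact: hsp.
  move/LG: hl; rewrite !bE => -[k hk].
  apply/LG'; rewrite !bE' gammaE //.
  have /eqP hq := allP (allP c1 t (mem5 t)) t' (mem5 t').
  move: hk hq.
  move: ((bfun tabG' u e0' t' vv - bfun tabG' u e0' t vv -
     2 * (bfun tabG u e0 t' vv - bfun tabG u e0 t vv)) %/ 5)%Z => p.
  move: (bfun tabG u e0 t vv) (bfun tabG u e0 t' vv) (bfun tabG' u e0' t vv)
    (bfun tabG' u e0' t' vv) (D vv) => A B C D2 n hk hq.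
  exists (2 * k - p); clear -hk hq; lra.
case=> hsp hl; have [t' ET] := (spanE T').1 hsp; subst T'.
split; first exact: hsp.
move/LG': hl; rewrite !bE' gammaE // => -[k hk].
apply/LG; rewrite !bE.
have /eqP hq := allP (allP c1 t (mem5 t)) t' (mem5 t').
move: hk hq.
move: ((bfun tabG' u e0' t' vv - bfun tabG' u e0' t vv -
   2 * (bfun tabG u e0 t' vv - bfun tabG u e0 t vv)) %/ 5)%Z => p.
move: (bfun tabG u e0 t vv) (bfun tabG u e0 t' vv) (bfun tabG' u e0' t vv)
  (bfun tabG' u e0' t' vv) (D vv) => A B C D2 n hk hq.
exists (3 * (k + p) - (A + n - B)); clear -hk hq; lra.
Qed.
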